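(* Let $G$ be a finite unweighted undirected graph with $n$ nodes. Let $H$ be the spanning subgraph of $G$ obtained as follows: start with all nodes of $G$ and no edges; for each node $x$ of $G$, add to $H$ exactly $\lfloor n^{1/3} \rfloor$ edges of $G$ incident to $x$ (chosen arbitrarily), or, if $\deg_G(x) < \lfloor n^{1/3} \rfloor$, add all edges of $G$ incident to $x$. Then apply $6$-spanner-completion to $H$. Regardless of the choices made (of initial edges, of violating pairs, and of shortest paths), the resulting graph $H$ has at most $O(n^{4/3})$ edges.
   Context: For a graph $F$ and nodes $u,v$, $d_F(u,v)$ denotes the length (number of edges) of a shortest path from $u$ to $v$ in $F$ ($\infty$ if none exists). A spanning subgraph $H$ of $G$ is an additive $k$-spanner of $G$ if $d_H(u,v) \le d_G(u,v)+k$ for every pair of nodes $u,v$. The procedure $k$-spanner-completion applied to a spanning subgraph $H$ of $G$ is: as long as there exists a pair of nodes $u,v$ with $d_H(u,v) > d_G(u,v)+k$, pick such a pair, find a shortest path from $u$ to $v$ in $G$, and add all edges of this path to $H$. When it terminates, $H$ is an additive $k$-spanner of $G$. The $O(\cdot)$ bound refers to an absolute constant independent of $G$ and $n$. *)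

(* Defs.v *)
(* A finite simple graph G is a symmetric irreflexive
   relation e on a finType T (nodes = T, n = #|T|). Edges are unordered
   pairs, represented as 2-element sets [set x; y]. A spanning subgraph H
   is given by its edge set H : {set {set T}}. *)
From mathcomp Require Import all_boot all_order.
Set Implicit Arguments. Unset Strict Implicit. Unset Printing Implicit Defensive.

Section Graphs.
Variable T : finType.

Definition gedges (e : rel T) : {set {set T}} :=
  [set [set x; y] | x in T, y in T & e x y].

Definition incident (e : rel T) (x : T) : {set {set T}} :=
  [set f in gedges e | x \in f].
Definition deg (e : rel T) (x : T) : nat := #|incident e x|.

Definition hrel (H : {set {set T}}) : rel T := fun x y => [set x; y] \in H.

Definition walk (r : rel T) (u v : T) (d : nat) : Prop :=
  exists p : seq T, [&& path r u p, last u p == v & size p == d].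

(* d_r(u,v) = d  (finite distance; infinite distance = no such d). *)
Definition dist_is (r : rel T) (u v : T) (d : nat) : Prop :=
  walk r u v d /\ forall d', d' < d -> ~ walk r u v d'.

Definition violating (e : rel T) (H : {set {set T}}) (k : nat) (u v : T) : Prop :=
  exists d, dist_is e u v d /\ forall d', d' <= d + k -> ~ walk (hrel H) u v d'.

Definition additive_spanner (e : rel T) (H : {set {set T}}) (k : nat) : Prop :=
  H \subset gedges e /\ forall u v, ~ violating e H k u v.

Definition path_edges (u : T) (p : seq T) : {set {set T}} :=
  [set f in [seq [set a.1; a.2] | a <- zip (u :: p) p]].

Definition completion_step (e : rel T) (k : nat) (H H' : {set {set T}}) : Prop :=
  exists (u v : T) (p : seq T),
    [/\ violating e H k u v,
        [&& path e u p & last u p == v],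
        dist_is e u v (size p) &
        H' = H :|: path_edges u p].

End Graphs.

(* Main.v *)
Require Import Defs.
From mathcomp Require Import all_boot all_order zify.
From Stdlib Require Import ClassicalEpsilon.
Set Implicit Arguments. Unset Strict Implicit. Unset Printing Implicit Defensive.
Ltac clearjunk := repeat match goal with
 | H : is_true (_ \in _) |- _ => clear H
 | H : is_true (_ \proper _) |- _ => clear H
 end.
Ltac slia := clearjunk; lia.
Ltac snia := clearjunk; nia.



Definition pb (P : Prop) : bool := if excluded_middle_informative P then true else false.
Lemma pbP P : reflect P (pb P).
Proof. rewrite /pb; case: excluded_middle_informative => h; by constructor. Qed.

Section Walks.
Variable T : finType.
Implicit Types (r : rel T).

Lemma walk0 r a : walk r a a 0.
Proof. by exists [::]; rewrite /= eqxx. Qed.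

Lemma walk1 r a b : r a b -> walk r a b 1.
Proof. by move=> h; exists [:: b]; rewrite /= h eqxx. Qed.

Lemma walk_cat r a b c d1 d2 : walk r a b d1 -> walk r b c d2 -> walk r a c (d1 + d2).
Proof.
move=> [p /and3P [hp /eqP hl /eqP hs]] [q /and3P [hq /eqP hl' /eqP hs']].
exists (p ++ q); rewrite cat_path last_cat size_cat hl hp hq hl' hs hs' !eqxx.
by [].
Qed.

Lemma walk_sub r r' a b d : (forall x y, r x y -> r' x y) -> walk r a b d -> walk r' a b d.
Proof.
move=> hr [p /and3P [hp hl hs]]; exists p; rewrite hl hs andbT andbT.
by apply: sub_path hp => x y /hr.
Qed.

Lemma walk_seg r (f : nat -> T) i j : i <= j ->
  (forall t, i <= t < j -> r (f t) (f t.+1)) -> walk r (f i) (f j) (j - i).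
Proof.
elim: j => [|j IH] hij h.
  have hi : i = 0 by slia.
  by rewrite hi subnn; apply: walk0.
case: (ltngtP i j.+1) hij => // [hlt|->] _; last by rewrite subnn; apply: walk0.
have -> : j.+1 - i = (j - i) + 1 by slia.
apply: walk_cat (IH _ _) (walk1 _); first by slia.
  by move=> t ht; apply: h; slia.
by apply: h; slia.
Qed.

Definition walk_le r a b t := exists d, d <= t /\ walk r a b d.

Lemma walk_le_cat r a b c t1 t2 : walk_le r a b t1 -> walk_le r b c t2 -> walk_le r a c (t1 + t2).
Proof.
move=> [d1 [h1 w1]] [d2 [h2 w2]]; exists (d1 + d2); split; first by slia.
exact: walk_cat w1 w2.
Qed.

Lemma walk_le_of r a b d t : walk r a b d -> d <= t -> walk_le r a b t.
Proof. by move=> w h; exists d. Qed.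

Lemma walk_le_mono r a b t t' : t <= t' -> walk_le r a b t -> walk_le r a b t'.
Proof. by move=> h [d [hd w]]; exists d; split => //; slia. Qed.

Lemma walk_le_sub r r' a b t : (forall x y, r x y -> r' x y) -> walk_le r a b t -> walk_le r' a b t.
Proof. by move=> hr [d [hd w]]; exists d; split => //; apply: walk_sub w. Qed.

Lemma dist_uniq r a b d d' : dist_is r a b d -> dist_is r a b d' -> d = d'.
Proof.
move=> [w h] [w' h']; case: (ltngtP d d') => // hlt.
  by case: (h' _ hlt w).
by case: (h _ hlt w').
Qed.

Definition Dst r a b : nat :=
  match excluded_middle_informative (exists d, pb (walk r a b d)) with
  | left H => ex_minn H | right _ => 0 end.

Lemma DstP r a b d : walk r a b d -> walk r a b (Dst r a b) /\ Dst r a b <= d.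
Proof.
move=> w; rewrite /Dst; case: excluded_middle_informative => [H|H]; last first.
  by case: H; exists d; apply/pbP.
case: ex_minnP => m /pbP hm hmin; split => //; apply: hmin; exact/pbP.
Qed.

End Walks.


Section G.
Variable T : finType.

Lemma set2_inv (x y a b : T) : [set x; y] = [set a; b] -> (x = a /\ y = b) \/ (x = b /\ y = a).
Proof.
move=> E.
have hx : x \in [set a; b] by rewrite -E set21.
have hy : y \in [set a; b] by rewrite -E set22.
have ha : a \in [set x; y] by rewrite E set21.
have hb : b \in [set x; y] by rewrite E set22.
move: hx hy ha hb; rewrite !inE => /orP[]/eqP hx /orP[]/eqP hy /orP[]/eqP ha /orP[]/eqP hb;
  subst; auto.
Qed.

Definition q (u : T) p t := nth u (u :: p) t.

Lemma q_edge (r : rel T) u p t : path r u p -> t < size p -> r (q u p t) (q u p t.+1).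
Proof. by move/(pathP u) => h ht; apply: h. Qed.

Lemma path_edgesP (u : T) p f :
  reflect (exists2 t, t < size p & f = [set q u p t; q u p t.+1]) (f \in path_edges u p).
Proof.
rewrite /path_edges inE; apply: (iffP idP).
  elim: p u => [|x p IH] u //=; rewrite in_cons => /orP[/eqP ->|/IH [t ht ->]].
    by exists 0.
  exists t.+1 => //; rewrite /q /=.
  by congr [set _; _]; apply: set_nth_default => /=; slia.
move=> [t]; elim: p u t => [|x p IH] u t //= ht hf; rewrite in_cons.
case: t ht hf => [|t] ht hf; first by rewrite hf /q /= eqxx.
apply/orP; right; apply: (IH x t); first by []. rewrite hf.
rewrite /q /=.
by congr [set _; _]; apply: set_nth_default => /=; slia.
Qed.

Lemma q_last (u : T) p : last u p = q u p (size p).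
Proof. exact: last_nth. Qed.

End G.


Section G2.
Variables (T : finType) (e : rel T) (esym : symmetric e) (eirr : irreflexive e).
Variables (k : nat) (S : T -> {set {set T}}).
Hypothesis hS : forall x, S x \subset incident e x /\ #|S x| = minn k (deg e x).

Lemma gedgesP a b : [set a; b] \in gedges e -> e a b.
Proof.
case/imset2P => x y hx; rewrite inE => /andP [_ hxy] /set2_inv [[-> ->]|[-> ->]] //.
by rewrite esym.
Qed.

Lemma in_gedges a b : e a b -> [set a; b] \in gedges e.
Proof. by move=> h; apply/imset2P; exists a b; rewrite ?inE ?h. Qed.

Definition N x := [set y | [set x; y] \in S x].

Lemma N_e x y : y \in N x -> e x y.
Proof.
rewrite inE => h; have := subsetP (hS x).1 _ h; rewrite inE => /andP [hg _].
exact: gedgesP.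
Qed.

Lemma card_N x : #|N x| = #|S x|.
Proof.
have -> : S x = [set [set x; y] | y in N x].
  apply/setP => f; apply/idP/imsetP.
    move=> hf; have := subsetP (hS x).1 _ hf; rewrite inE => /andP [/imset2P [a b _ _ hab] hx].
    move: hx hf; rewrite hab !inE => /orP[]/eqP <- hf.
      by exists b; rewrite ?inE.
    by exists a; rewrite ?inE // setUC.
  by move=> [y]; rewrite inE => h ->.
symmetry; apply: card_in_imset => y y' hy hy' E.
have : y \in [set x; y'] by rewrite -E set22.
rewrite !inE => /orP[/eqP hyx|/eqP //].
by move: (N_e hy); rewrite hyx eirr.
Qed.

Lemma heavy x y : e x y -> [set x; y] \notin S x -> #|S x| = k.
Proof.
move=> hxy hn.
have hp : S x \proper incident e x.
  rewrite properE (hS x).1 /=; apply/subsetPn; exists [set x; y] => //.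
  by rewrite inE in_gedges // set21.
have := proper_card hp; rewrite (hS x).2 /deg => h.
by move: h; case: (leqP k (#|incident e x|)) => hk; rewrite ?(minn_idPl hk) ?(minn_idPr (ltnW hk)) //; slia.
Qed.

End G2.


Lemma card_as_sum (T : finType) (A : {set T}) : #|A| = \sum_(t : T) (t \in A).
Proof. rewrite -sum1_card big_mkcond /=; apply: eq_bigr => i _; by case: (i \in A). Qed.

Lemma card_window s (B : {set 'I_s}) i0 :
  (forall j : 'I_s, j \in B -> i0 <= j + 2 /\ (j : nat) <= i0 + 2) -> #|B| <= 5.
Proof.
move=> h; rewrite cardE -(size_map val).
have -> : 5 = size (iota (i0 - 2) 5) by rewrite size_iota.
apply: uniq_leq_size; first by rewrite (map_inj_uniq val_inj) enum_uniq.
move=> x /mapP [j]; rewrite mem_enum => /h [h1 h2] ->; rewrite mem_iota /=; slia.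
Qed.


Section Step.
Variables (T : finType) (e : rel T) (esym : symmetric e) (eirr : irreflexive e).
Variables (k : nat) (S : T -> {set {set T}}).
Hypothesis hS : forall x, S x \subset incident e x /\ #|S x| = minn k (deg e x).

Definition good (H : {set {set T}}) : {set T * T * 'I_5} :=
  [set z : T * T * 'I_5 | pb (walk_le (hrel H) z.1.1 z.1.2 (Dst e z.1.1 z.1.2 + nat_of_ord z.2))].

Lemma good_mono (H H' : {set {set T}}) : H \subset H' -> good H \subset good H'.
Proof.
move=> hH; apply/subsetP => z; rewrite !inE => /pbP w; apply/pbP.
by apply: walk_le_sub w => x y; rewrite /hrel => /(subsetP hH).
Qed.

Variables (H H' : {set {set T}}) (u v : T) (p : seq T).
Hypothesis H0H : \bigcup_(x : T) S x \subset H.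
Hypothesis hH' : H' = H :|: path_edges u p.
Hypothesis hviol : violating e H 6 u v.
Hypothesis hpath : path e u p.
Hypothesis hlast : last u p == v.
Hypothesis hdist : dist_is e u v (size p).

Let s := size p.
Let qq := q u p.

Lemma HH' : H \subset H'.
Proof. by rewrite hH' subsetUl. Qed.

Lemma hv : v = qq s.
Proof. by rewrite -(eqP hlast) q_last. Qed.

Lemma qq0 : qq 0 = u.
Proof. by []. Qed.

Lemma shortest d : walk e u v d -> s <= d.
Proof. move: hdist => [_ h] w; rewrite leqNgt; apply/negP => hd; exact: h _ hd w. Qed.

Lemma noHwalk d : d <= s + 6 -> ~ walk (hrel H) u v d.
Proof.
move: hviol => [d0 [hd0 h]]; have e0 := dist_uniq hd0 hdist; subst d0; exact: h.
Qed.

Lemma N_H x y : y \in N S x -> hrel H x y /\ hrel H y x.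
Proof.
rewrite inE => h.
have hx : [set x; y] \in H by apply: (subsetP H0H); apply/bigcupP; exists x.
by rewrite /hrel; split => //; rewrite setUC.
Qed.

Lemma N_H' x y : y \in N S x -> hrel H' x y /\ hrel H' y x.
Proof. by move/N_H => [h1 h2]; rewrite /hrel !(subsetP HH'). Qed.

Lemma segE i j : i <= j <= s -> walk e (qq i) (qq j) (j - i).
Proof.
move=> /andP [h1 h2]; apply: walk_seg => // t ht; apply: q_edge => //; rewrite -/s; slia.
Qed.

Lemma segH' i j : i <= j <= s -> walk (hrel H') (qq i) (qq j) (j - i).
Proof.
move=> /andP [h1 h2]; apply: walk_seg => // t ht.
rewrite /hrel hH' inE; apply/orP; right; apply/path_edgesP; exists t => //; rewrite -/s; slia.
Qed.

Definition miss t := (t < s) && ([set qq t; qq t.+1] \notin H).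

Lemma segH i j : i <= j <= s -> (forall t, i <= t < j -> ~~ miss t) ->
  walk (hrel H) (qq i) (qq j) (j - i).
Proof.
move=> /andP [h1 h2] hm; apply: walk_seg => // t ht.
have := hm t ht; rewrite /miss negb_and negbK /hrel => /orP [|//]; slia.
Qed.

Lemma miss_heavy t : miss t -> #|S (qq t)| = k /\ #|S (qq t.+1)| = k.
Proof.
move=> /andP [ht hn]; have he := q_edge hpath ht.
have hnS : forall x y, [set x; y] \notin H -> [set x; y] \notin S x.
  move=> x y; apply: contra => h; apply: (subsetP H0H); apply/bigcupP; by exists x.
split; first by apply: (heavy hS he); apply: hnS.
apply: (heavy hS (y := qq t)); first by rewrite esym.
by apply: hnS; rewrite setUC.
Qed.

Lemma window y t1 t2 : t1 <= t2 <= s -> y \in N S (qq t1) -> y \in N S (qq t2) -> t2 <= t1 + 2.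
Proof.
move=> /andP [h1 h2] hy1 hy2.
have w1 : walk e u (qq t1) t1.
  have := @segE 0 t1; rewrite subn0; apply; slia.
have w2 : walk e (qq t2) v (s - t2).
  rewrite hv; apply: segE; slia.
have w3 : walk e (qq t1) (qq t2) 2.
  have h3 : e y (qq t2) by rewrite esym (N_e esym hS hy2).
  exact: (walk_cat (walk1 (N_e esym hS hy1)) (walk1 h3)).
have := shortest (walk_cat (walk_cat w1 w3) w2); slia.
Qed.



Definition Pairs := [set z.1 | z in good H' :\: good H].

Lemma event p1 p2 t : ~ walk_le (hrel H) p1 p2 t -> walk_le (hrel H') p1 p2 t ->
  Dst e p1 p2 <= t <= Dst e p1 p2 + 4 -> (p1, p2) \in Pairs.
Proof.
move=> hn hw /andP [h1 h2].
have hlt : t - Dst e p1 p2 < 5 by slia.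
apply/imsetP; exists ((p1, p2), Ordinal hlt) => //.
have ht : Dst e p1 p2 + (t - Dst e p1 p2) = t by slia.
rewrite !inE /= ht; apply/andP; split; last by apply/pbP.
by apply/negP => /pbP.
Qed.

Lemma walkE3 x y z d : e x y -> walk e y z d -> forall w, e z w -> walk e x w (1 + d + 1).
Proof. by move=> h1 w2 w h3; apply: walk_cat (walk_cat (walk1 h1) w2) (walk1 h3). Qed.

Lemma walkH3 (r : rel T) x y z d : r x y -> walk r y z d -> forall w, r z w -> walk r x w (1 + d + 1).
Proof. by move=> h1 w2 w h3; apply: walk_cat (walk_cat (walk1 h1) w2) (walk1 h3). Qed.

Lemma core a c j yf y yl :
  (forall t, t < a -> ~~ miss t) -> (forall t, c <= t -> ~~ miss t) ->
  a <= j -> j <= c -> c <= s ->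
  yf \in N S (qq a) -> y \in N S (qq j) -> yl \in N S (qq c) ->
  (yf, y) \in Pairs \/ (y, yl) \in Pairs.
Proof.
move=> ha hc haj hjc hcs hyf hy hyl.
have ef : e yf (qq a) by rewrite esym (N_e esym hS hyf).
have ey : e (qq j) y := N_e esym hS hy.
have ey' : e y (qq j) by rewrite esym.
have el : e (qq c) yl := N_e esym hS hyl.
have el' : e yl (qq c) by rewrite esym.
have wu : walk e u (qq a) a by have := @segE 0 a; rewrite subn0; apply; slia.
have wv : walk e (qq j) v (s - j) by rewrite hv; apply: segE; slia.
have wu' : walk e u (qq j) j by have := @segE 0 j; rewrite subn0; apply; slia.
have wv' : walk e (qq c) v (s - c) by rewrite hv; apply: segE; slia.
have sj : walk e (qq a) (qq j) (j - a) by apply: segE; slia.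
have sj' : walk (hrel H') (qq a) (qq j) (j - a) by apply: segH'; slia.
have wE1 := walkE3 ef sj ey.
have wH1 : walk_le (hrel H') yf y (j - a + 2).
  apply: walk_le_of (walkH3 (N_H' hyf).2 sj' (N_H' hy).1) _; slia.
have [wD1 hD1] := DstP wE1.
have lo1 : j - a + 2 <= Dst e yf y + 4.
  have := shortest (walk_cat (walk_cat wu (walkE3 (N_e esym hS hyf) wD1 ey')) wv); slia.
have sc : walk e (qq j) (qq c) (c - j) by apply: segE; slia.
have sc' : walk (hrel H') (qq j) (qq c) (c - j) by apply: segH'; slia.
have wE2 := walkE3 ey' sc el.
have wH2 : walk_le (hrel H') y yl (c - j + 2).
  apply: walk_le_of (walkH3 (N_H' hy).2 sc' (N_H' hyl).1) _; slia.
have [wD2 hD2] := DstP wE2.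
have lo2 : c - j + 2 <= Dst e y yl + 4.
  have := shortest (walk_cat (walk_cat wu' (walkE3 ey wD2 el')) wv'); slia.
case: (pbP (walk_le (hrel H) yf y (j - a + 2))) => [w1|n1]; last first.
  left; apply: event; [exact: n1 | exact: wH1 | apply/andP; split; slia].
case: (pbP (walk_le (hrel H) y yl (c - j + 2))) => [w2|n2]; last first.
  right; apply: event; [exact: n2 | exact: wH2 | apply/andP; split; slia].
exfalso.
have hu : walk (hrel H) u (qq a) a.
  have := @segH 0 a; rewrite subn0; apply; first slia.
  by move=> t ht; apply: ha; slia.
have hw : walk (hrel H) (qq c) v (s - c).
  rewrite hv; apply: segH; first slia.
  by move=> t ht; apply: hc; slia.
have x1 := walk_le_cat (walk_le_cat (walk_le_of hu (leqnn _)) (walk_le_of (walk1 (N_H hyf).1) (leqnn _))) w1.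
have x2 := walk_le_cat (walk_le_cat x1 w2) (walk_le_of (walk1 (N_H hyl).2) (leqnn _)).
have [d [hd wd]] := walk_le_cat x2 (walk_le_of hw (leqnn _)).
apply: (noHwalk (d := d)) => //; slia.
Qed.

End Step.


Section Count.
Variables (T : finType) (e : rel T) (esym : symmetric e) (eirr : irreflexive e).
Variables (k : nat) (S : T -> {set {set T}}).
Hypothesis hS : forall x, S x \subset incident e x /\ #|S x| = minn k (deg e x).
Variables (H H' : {set {set T}}) (u v : T) (p : seq T).
Hypothesis H0H : \bigcup_(x : T) S x \subset H.
Hypothesis hH' : H' = H :|: path_edges u p.
Hypothesis hviol : violating e H 6 u v.
Hypothesis hpath : path e u p.
Hypothesis hlast : last u p == v.
Hypothesis hdist : dist_is e u v (size p).

Lemma step_count : k ^ 2 * #|H' :\: H| <= 10 * #|good e H' :\: good e H|.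
Proof.
set s := size p; set qq := q u p.
pose A : {set 'I_s} := [set t : 'I_s | miss H u p t].
have hl : #|H' :\: H| <= #|A|.
  apply: leq_trans (leq_imset_card (fun t : 'I_s => [set qq t; qq t.+1]) A).
  apply: subset_leq_card; apply/subsetP => f; rewrite inE hH' inE => /andP [hf].
  rewrite (negbTE hf) /= => /path_edgesP [t ht hft].
  apply/imsetP; exists (Ordinal ht) => //.
  by rewrite inE /miss ht -hft hf.
have [A0|/set0Pn [t0 ht0]] := eqVneq A set0.
  by move: hl; rewrite A0 cards0 leqn0 => /eqP ->; rewrite muln0.
have exm : exists t, miss H u p t by exists t0; move: ht0; rewrite inE.
have ubm : forall t, miss H u p t -> t <= s by move=> t /andP [h _]; apply: ltnW.
case: (ex_minnP exm) => a ma amin.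
case: (ex_maxnP exm ubm) => c1 mc cmax.
have ha : forall t, t < a -> ~~ miss H u p t.
  by move=> t ht; apply/negP => /amin; rewrite leqNgt ht.
have hc : forall t, c1.+1 <= t -> ~~ miss H u p t.
  by move=> t ht; apply/negP => /cmax; rewrite leqNgt ht.
have hcs : c1 < s by case/andP: mc.
have hac : a <= c1 by apply: amin.
have hN : forall t, miss H u p t -> #|N S (qq t)| = k /\ #|N S (qq t.+1)| = k.
  by move=> t ht; rewrite !(card_N esym eirr hS); apply: (miss_heavy esym hS H0H hpath ht).
have Na : #|N S (qq a)| = k := (hN a ma).1.
have Nc : #|N S (qq c1.+1)| = k := (hN c1 mc).2.
pose Y := \bigcup_(t in A) N S (qq t).
have claim1 : k * #|A| <= 5 * #|Y|.
  have -> : k * #|A| = \sum_(t in A) #|N S (qq t)|.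
    rewrite mulnC -sum_nat_const; apply: eq_bigr => t; rewrite inE => ht.
    by rewrite (hN t ht).1.
  pose B y := [set t in A | y \in N S (qq t)].
  have -> : \sum_(t in A) #|N S (qq t)| = \sum_y #|B y|.
    have -> : \sum_(t in A) #|N S (qq t)| = \sum_t \sum_y ((t \in A) && (y \in N S (qq t))).
      rewrite big_mkcond /=; apply: eq_bigr => t _.
      case: (t \in A) => /=; first by apply: card_as_sum.
      by rewrite big1.
    rewrite exchange_big /=; apply: eq_bigr => y _.
    by rewrite (card_as_sum (B y)); apply: eq_bigr => t _; rewrite !inE.
  rewrite (card_as_sum Y) big_distrr /=; apply: leq_sum => y _.
  case: (boolP (y \in Y)) => hy; last first.
    suff -> : B y = set0 by rewrite cards0.
    apply/setP => t; rewrite in_set0; apply/negP; rewrite inE => /andP [htA hyt].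
    by move/negP: hy; apply; apply/bigcupP; exists t.
  rewrite muln1; case: (set_0Vmem (B y)) => [->|[i0 hi0]]; first by rewrite cards0.
  apply: (card_window (i0 := i0)) => j hj.
  have hB : forall t, t \in B y -> y \in N S (qq t) by move=> t; rewrite inE => /andP [].
  move: (hB _ hi0) (hB _ hj) => h0 {}hj.
  have hi0s := ltn_ord i0; have hjs := ltn_ord j.
  case: (leqP i0 j) => hij.
    have := window esym hS H0H hpath hlast hdist (t1 := i0) (t2 := j) _ h0 hj.
    rewrite hij /= => /(_ (ltnW hjs)) => h; split; slia.
  have := window esym hS H0H hpath hlast hdist (t1 := j) (t2 := i0) _ hj h0.
  rewrite (ltnW hij) /= => /(_ (ltnW hi0s)) => h; split; slia.
pose P := Pairs e H H'.
pose Y1 := [set y in Y | [forall yf in N S (qq a), (yf, y) \in P]].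
pose Y2 := Y :\: Y1.
have sub1 : setX (N S (qq a)) Y1 \subset P.
  apply/subsetP => [[yf y]]; rewrite inE /= => /andP [hyf]; rewrite inE => /andP [_ /forallP /(_ yf)].
  by rewrite hyf.
have sub2 : setX Y2 (N S (qq c1.+1)) \subset P.
  apply/subsetP => [[y yl]]; rewrite inE /= => /andP [hy2 hyl].
  move: hy2; rewrite inE => /andP [hn1 hy]; move: hn1; rewrite inE hy /= => /forallPn [yf].
  rewrite negb_imply => /andP [hyf hnp].
  case/bigcupP: hy => j; rewrite inE => mj hyj.
  have haj : a <= j := amin _ mj.
  have hjc : j <= c1.+1 by have := cmax _ mj; slia.
  have := core esym hS H0H hH' hviol hpath hlast hdist ha hc haj hjc hcs hyf hyj hyl.
  by case => // h; move/negP: hnp.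
have hY : #|Y1| + #|Y2| = #|Y|.
  have e1 : Y :&: Y1 = Y1 by apply/setIidPr/subsetP => y; rewrite inE => /andP [].
  by rewrite -(cardsID Y1 Y) e1.
have c1' := subset_leq_card sub1; have c2' := subset_leq_card sub2.
rewrite !cardsX Na Nc in c1' c2'.
have c3 : #|P| <= #|good e H' :\: good e H| by apply: leq_imset_card.
clear -hl claim1 c1' c2' c3 hY.
snia.
Qed.
End Count.


Lemma card_bigcup_le (T I : finType) (F : I -> {set T}) :
  #|\bigcup_(x : I) F x| <= \sum_(x : I) #|F x|.
Proof.
elim/big_rec2: _ => [|i A n _ h]; first by rewrite cards0.
rewrite cardsU; slia.
Qed.

Lemma card_split (T : finType) (X Y : {set T}) : X \subset Y -> #|Y| = #|X| + #|Y :\: X|.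
Proof. by move=> h; rewrite -(cardsID X Y) (setIidPr h). Qed.

Lemma final_arith k n E : 1 <= k -> k ^ 3 <= n < k.+1 ^ 3 ->
  k ^ 2 * E <= k ^ 2 * (n * k) + 50 * n ^ 2 -> E ^ 3 <= 401 ^ 3 * n ^ 4.
Proof.
move=> hk /andP [h1 h2] h.
have h8 : n <= 8 * k ^ 3.
  have : k.+1 ^ 3 <= 8 * k ^ 3 by rewrite !expnS expn0; snia.
  slia.
have hE : k ^ 2 * E <= k ^ 2 * (401 * n * k).
  apply: leq_trans h _; rewrite !expnS expn0 in h8 *; snia.
rewrite leq_pmul2l ?expn_gt0 ?hk // in hE.
apply: leq_trans (_ : (401 * n * k) ^ 3 <= _).
  by rewrite leq_exp2r.
rewrite !expnMn (expnS n 3) -mulnA.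
apply: leq_mul; first exact: leqnn.
rewrite [X in X <= _]mulnC; apply: leq_mul; [exact: h1 | exact: leqnn].
Qed.

Theorem theorem1 :
  exists C : nat,
  forall (T : finType) (e : rel T),
    symmetric e -> irreflexive e ->
  forall k : nat, k ^ 3 <= #|T| < k.+1 ^ 3 ->
  forall S : T -> {set {set T}},
    (forall x, S x \subset incident e x /\ #|S x| = minn k (deg e x)) ->
  forall (Hs : nat -> {set {set T}}) (m : nat),
    Hs 0 = \bigcup_(x : T) S x ->
    (forall i, i < m -> completion_step e 6 (Hs i) (Hs i.+1)) ->
    (forall u v, ~ violating e (Hs m) 6 u v) ->
    #|Hs m| ^ 3 <= C * #|T| ^ 4.
Proof.
exists (401 ^ 3) => T e esym eirr k hk S hS Hs m H0 hstep _.
have HS0 : #|Hs 0| <= #|T| * k.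
  rewrite H0; apply: leq_trans (@card_bigcup_le _ _ S) _.
  apply: leq_trans (_ : \sum_(x : T) #|S x| <= \sum_(x : T) k) _.
    by apply: leq_sum => x _; rewrite (hS x).2 geq_minl.
  by rewrite sum_nat_const.
have inv : forall i, i <= m -> Hs 0 \subset Hs i /\
    k ^ 2 * #|Hs i| + 10 * #|good e (Hs 0)| <= k ^ 2 * #|Hs 0| + 10 * #|good e (Hs i)|.
  elim => [|i IH] hi; first by rewrite subxx.
  have [sub iv] := IH (ltnW hi).
  have [u [v [p [hviol /andP [hp hl] hd hH']]]] := hstep i hi.
  have H0H : \bigcup_(x : T) S x \subset Hs i by rewrite -H0.
  have sc := step_count esym eirr hS H0H hH' hviol hp hl hd.
  have s1 : Hs i \subset Hs i.+1 by rewrite hH' subsetUl.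
  have e1 := card_split s1.
  have e2 := card_split (good_mono e s1).
  split; first exact: subset_trans sub s1.
  rewrite e1 e2 mulnDr; snia.
have [_ iv] := inv m (leqnn m).
have hg : #|good e (Hs m)| <= #|T| ^ 2 * 5.
  by apply: leq_trans (max_card _) _; rewrite !card_prod card_ord.
case: (posnP k) => hk0.
  have hT : #|T| = 0 by move: hk; rewrite hk0; slia.
  case: m hstep iv hg {inv} => [|m] hstep iv hg.
    move: HS0; rewrite hT mul0n leqn0 => /eqP ->.
    rewrite (exp0n (isT : 0 < 3)); exact: leq0n.
  have [u _] := hstep 0 isT.
  have h0 : 0 < #|T| by apply/card_gt0P; exists u.
  by exfalso; move: h0; rewrite hT ltnn.
apply: final_arith (hk0) hk _.
have h5 : k ^ 2 * #|Hs 0| <= k ^ 2 * (#|T| * k) by apply: leq_mul => //; exact: leqnn.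
clear -h5 iv hg; snia.
Qed.
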